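(* Let $n$ be a positive integer and let $\mathcal F$ be an $\mathcal N$-saturated family of subsets of $[n]$. Let $\mathcal G$ be a component of $\mathcal F$. If $T$ is a maximal element of $\mathcal G$ and $S$ is a minimal element of $\mathcal G$ (with respect to inclusion), then $S\subseteq T$.
   Context: The poset $\mathcal N$ has four elements $a,b,c,d$ with $a<c$, $b<c$, $b<d$ and no other comparabilities (so $a,b$ are its minimal elements, $c,d$ its maximal elements; $c$ is the unique maximal element comparable to both minimal elements and $b$ the unique minimal element comparable to both maximal elements). A family $\mathcal Q$ of sets (ordered by inclusion) contains an induced copy of $\mathcal N$ if there are distinct sets in $\mathcal Q$ whose inclusion relations are exactly those of $a,b,c,d$ above. A family $\mathcal F$ of subsets of $[n]=\{1,\dots,n\}$ is $\mathcal N$-saturated if $\mathcal F$ contains no induced copy of $\mathcal N$, but for every $S\subseteq[n]$ with $S\notin\mathcal F$, the family $\mathcal F\cup\{S\}$ contains an induced copy of $\mathcal N$. A component of $\mathcal F$ is the vertex set of a connected component of the Hasse diagram (as a graph) of the poset $(\mathcal F\setminus\{\emptyset,[n]\},\subseteq)$. *)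

(* Defs.v *)
From mathcomp Require Import all_boot.
Set Implicit Arguments. Unset Strict Implicit. Unset Printing Implicit Defensive.

Section Defs.
Variable n : nat.
Notation sT := {set 'I_n}.

Definition comparable (X Y : sT) : bool := (X \subset Y) || (Y \subset X).

(* Q contains an induced copy of the poset N:
   a < c, b < c, b < d, and no other comparabilities. *)
Definition has_induced_N (Q : {set sT}) : Prop :=
  exists a b c d : sT,
    [/\ [/\ a \in Q, b \in Q, c \in Q & d \in Q],
        uniq [:: a; b; c; d],
        [/\ a \subset c, b \subset c & b \subset d] &
        [/\ ~~ comparable a b, ~~ comparable a d & ~~ comparable c d]].

Definition N_saturated (F : {set sT}) : Prop :=
  ~ has_induced_N F /\ forall S : sT, S \notin F -> has_induced_N (S |: F).

Definition covers_in (P : {set sT}) (X Y : sT) : bool :=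
  [&& X \in P, Y \in P, X \proper Y &
      [forall Z in P, ~~ ((X \proper Z) && (Z \proper Y))]].

Definition hasse_adj (P : {set sT}) : rel sT :=
  fun X Y => covers_in P X Y || covers_in P Y X.

Definition inner (F : {set sT}) : {set sT} := F :\: [set set0; setT].

(* G is (the vertex set of) a connected component of the Hasse diagram
   of (F \ {emptyset, [n]}, \subset). *)
Definition is_component (F G : {set sT}) : Prop :=
  exists2 X, X \in inner F & G = [set Y | connect (hasse_adj (inner F)) X Y].

Definition maximal_in (G : {set sT}) (T : sT) : Prop :=
  T \in G /\ forall U, U \in G -> T \subset U -> U = T.

Definition minimal_in (G : {set sT}) (S : sT) : Prop :=
  S \in G /\ forall U, U \in G -> U \subset S -> U = S.

End Defs.

(* Main.v *)
Require Import Defs.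
From mathcomp Require Import all_boot.
Set Implicit Arguments. Unset Strict Implicit.

Lemma hasse_sym n (P : {set {set 'I_n}}) : symmetric (hasse_adj P).
Proof. by move=> x y; rewrite /hasse_adj orbC. Qed.

Lemma hasse_comp n (P : {set {set 'I_n}}) x y :
  hasse_adj P x y -> [/\ x \in P, y \in P & Defs.comparable x y].
Proof.
rewrite /hasse_adj /covers_in /Defs.comparable.
by case/orP=> /and4P [-> -> /proper_sub -> _]; rewrite ?orbT.
Qed.

Lemma conn_in n (P : {set {set 'I_n}}) x y :
  x \in P -> connect (hasse_adj P) x y -> y \in P.
Proof.
move=> Hx /connectP [p Hp ->]; elim: p x Hx Hp => [|z p IH] x Hx //=.
case/andP=> /hasse_comp [_ Hz _] Hp; exact: IH Hz Hp.
Qed.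

Theorem lemma2p1 (n : nat) (F G : {set {set 'I_n}}) (S T : {set 'I_n}) :
  0 < n -> N_saturated F -> is_component F G ->
  maximal_in G T -> minimal_in G S -> S \subset T.
Proof.
move=> _ [noN _] [X HX HG] [TG Tmax] [SG Smin].
set e := hasse_adj (inner F).
have inG Y : (Y \in G) = connect e X Y by rewrite HG inE.
have GF Y : Y \in G -> Y \in F.
  rewrite inG => /(conn_in HX); rewrite /inner inE; by case/andP.
have stepG Y Z : Y \in G -> e Y Z -> Z \in G.
  rewrite !inG => HY HYZ; apply: connect_trans HY (connect1 HYZ).
pose V (Y : {set 'I_n}) := exists2 u, u \in G & (S \subset u) && (Y \subset u).
have stepV (Y Z : {set 'I_n}) : Y \in G -> V Y -> e Y Z -> V Z.
  move=> YG [u uG /andP [Su Yu]] HYZ.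
  have ZG := stepG _ _ YG HYZ.
  case/hasse_comp: HYZ => _ _ /orP [YZ|ZY]; last first.
    by exists u => //; rewrite Su (subset_trans ZY Yu).
  case SZ: (S \subset Z); first by exists Z => //; rewrite SZ subxx.
  case Zu: (Z \subset u); first by exists u => //; rewrite Su Zu.
  case uZ: (u \subset Z); first by rewrite (subset_trans Su uZ) in SZ.
  case SY: (S \subset Y); first by rewrite (subset_trans SY YZ) in SZ.
  case YS: (Y \subset S).
    by move: (Smin Y YG YS) => E; subst Y; rewrite YZ in SZ.
  case ZS: (Z \subset S).
    by move: (Smin Y YG (subset_trans YZ ZS)) => E; subst Y; rewrite YZ in SZ.
  exfalso; apply: noN; exists S, Y, u, Z; split.
  - by split; apply: GF.
  - rewrite /= !inE !negb_or; repeat (apply/andP; split); apply/negP => /eqP E; subst;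
    by rewrite ?subxx ?Yu ?Su in SY YS SZ Zu.
  - by split.
  - by rewrite /Defs.comparable SY YS SZ ZS Zu uZ.
have cST : connect e S T.
  have symE : connect_sym e by apply: sym_connect_sym; apply: hasse_sym.
  by apply: connect_trans (_ : connect e S X) _; [rewrite symE -inG | rewrite -inG].
have gen : forall p Y, Y \in G -> V Y -> path e Y p -> V (last Y p).
  elim=> [|z p IH] Y YG VY //= /andP [Hz Hp].
  exact: IH (stepG _ _ YG Hz) (stepV _ _ YG VY Hz) Hp.
have : V T.
  case/connectP: cST => p Hp ->; apply: gen => //.
  by exists S => //; rewrite subxx.
case=> u uG /andP [Su Tu]; by rewrite -(Tmax u uG Tu).
Qed.
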